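(* Let $f:[0,\infty)\to\mathbb{R}$ be four times differentiable with $f(0)\ge0$, $f'(0)\ge0$, and $f^{(4)}(u)>0$ for all $u>0$. Then the function $u\mapsto f(u)/u^2$ is strictly convex on $(0,\infty)$. *)

(* Defs.v *)
From Stdlib Require Import Reals.
From Coquelicot Require Import Coquelicot.
Open Scope R_scope.

(* [has_deriv_nonneg f f'] : f' is the derivative of f relative to the domain
   [0, +oo): for every x >= 0, (f y - f x)/(y - x) -> f' x as y -> x with
   y in [0,+oo), y <> x.  At x = 0 this is the one-sided (right) derivative,
   at x > 0 it is the usual derivative.  Values of f on (-oo,0) are irrelevant. *)
Definition has_deriv_nonneg (f f' : R -> R) : Prop :=
  forall x, 0 <= x ->
    filterlim (fun y => (f y - f x) / (y - x))
      (within (fun y => 0 <= y /\ y <> x) (locally x))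
      (locally (f' x)).

Definition strictly_convex_on (D : R -> Prop) (g : R -> R) : Prop :=
  forall x y t, D x -> D y -> x <> y -> 0 < t < 1 ->
    g (t * x + (1 - t) * y) < t * g x + (1 - t) * g y.

(* Main.v *)
Require Import Defs.
From Stdlib Require Import Reals Lra.
From Coquelicot Require Import Coquelicot.
Open Scope R_scope.

Definition W := within (fun y : R => 0 <= y /\ y <> 0) (@locally R_UniformSpace 0).
Global Instance W_filter : Filter W := within_filter _ _ _ (@filter_filter _ _ (locally_filter (0:R))).

Lemma ball_R (x e y : R) : ball x e y <-> Rabs (y - x) < e.
Proof. reflexivity. Qed.

Lemma DP (p p' : R -> R) x : has_deriv_nonneg p p' -> 0 < x ->
  derivable_pt_lim p x (p' x).
Proof.
  intros H Hx eps He.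
  specialize (H x (Rlt_le _ _ Hx) (ball (p' x) eps) (locally_ball _ (mkposreal _ He))).
  destruct H as [d Hd].
  assert (Hm : 0 < Rmin d x) by (apply Rmin_pos; [apply cond_pos|lra]).
  exists (mkposreal _ Hm). intros h Hh0 Hh. simpl in Hh.
  assert (Hb : ball x d (x + h)).
  { apply ball_R. replace (x + h - x) with h by ring.
    apply Rlt_le_trans with (1 := Hh); apply Rmin_l. }
  assert (Hd2 : 0 <= x + h /\ x + h <> x).
  { assert (Rabs h < x) by (apply Rlt_le_trans with (1 := Hh); apply Rmin_r).
    apply Rabs_def2 in H. split; lra. }
  specialize (Hd _ Hb Hd2). apply ball_R in Hd.
  replace (x + h - x) with h in Hd by ring. exact Hd.
Qed.

Lemma lim_plus F {FF : Filter F} (f g : R -> R) a b :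
  filterlim f F (locally a) -> filterlim g F (locally b) ->
  filterlim (fun x => f x + g x) F (locally (a + b)).
Proof. intros Hf Hg. eapply filterlim_comp_2; eauto. apply (filterlim_plus a b). Qed.

Lemma lim_mult F {FF : Filter F} (f g : R -> R) a b :
  filterlim f F (locally a) -> filterlim g F (locally b) ->
  filterlim (fun x => f x * g x) F (locally (a * b)).
Proof. intros Hf Hg. eapply filterlim_comp_2; eauto. apply (filterlim_mult a b). Qed.

Lemma lim_id : filterlim (fun y : R => y) W (locally (0:R)).
Proof.
  intros P [d Hd]. exists d. intros y Hy _. now apply Hd.
Qed.

Lemma lim_const (c : R) : filterlim (fun _ => c) W (locally c).
Proof. apply filterlim_const. Qed.

Lemma RC (p p' : R -> R) : has_deriv_nonneg p p' -> filterlim p W (locally (p 0)).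
Proof.
  intros H.
  assert (L : filterlim (fun y => p 0 + y * ((p y - p 0) / (y - 0))) W
                (locally (p 0 + 0 * p' 0))).
  { apply (@lim_plus W W_filter). apply lim_const. apply (@lim_mult W W_filter). apply lim_id.
    apply (H 0 (Rle_refl 0)). }
  rewrite Rmult_0_l, Rplus_0_r in L.
  eapply filterlim_within_ext; [|exact L].
  intros y [_ Hy]. simpl. field. lra.
Qed.

Lemma SI (p p' : R -> R) :
  (forall x, 0 < x -> derivable_pt_lim p x (p' x)) ->
  (forall x, 0 < x -> 0 < p' x) -> forall a b, 0 < a -> a < b -> p a < p b.
Proof.
  intros Hd Hp a b Ha Hab.
  destruct (MVT_cor2 p p' a b Hab) as [c [Hc1 Hc2]].
  { intros c Hc. apply Hd. lra. }
  assert (0 < p' c) by (apply Hp; lra).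
  assert (0 < p' c * (b - a)) by (apply Rmult_lt_0_compat; lra). lra.
Qed.

Lemma G (p p' : R -> R) : filterlim p W (locally (p 0)) ->
  (forall x, 0 < x -> derivable_pt_lim p x (p' x)) ->
  (forall x, 0 < x -> 0 < p' x) -> forall u, 0 < u -> p 0 < p u.
Proof.
  intros Hc Hd Hp u Hu.
  assert (S := SI p p' Hd Hp).
  assert (p 0 <= p (u/2)).
  { destruct (Rle_lt_dec (p 0) (p (u/2))) as [?|Hlt]; [assumption|exfalso].
    assert (He : 0 < p 0 - p (u/2)) by lra.
    destruct (Hc _ (locally_ball _ (mkposreal _ He))) as [d Hdd].
    set (y := Rmin (d/2) (u/4)).
    assert (Hy0 : 0 < y) by (apply Rmin_pos; [destruct d; simpl; lra|lra]).
    assert (Hy1 : y <= u/4) by apply Rmin_r.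
    assert (Hy2 : y <= d/2) by apply Rmin_l.
    assert (Hb : ball 0 d y).
    { apply ball_R. rewrite Rminus_0_r, Rabs_pos_eq by lra. destruct d; simpl in *; lra. }
    specialize (Hdd y Hb (conj (Rlt_le _ _ Hy0) (Rgt_not_eq _ _ Hy0))).
    change (Rabs (p y - p 0) < p 0 - p (u/2)) in Hdd.
    assert (p y < p (u/2)) by (apply S; lra).
    apply Rabs_def2 in Hdd. lra. }
  assert (p (u/2) < p u) by (apply S; lra). lra.
Qed.

Ltac fixD :=
  repeat match goal with
  | H : is_derive ?g ?x ?v |- context [Derive (fun x0 => ?g x0) ?x] =>
      replace (Derive (fun x0 => g x0) x) with v by (symmetry; now apply is_derive_unique)
  end.

Lemma main_aux (f f1 f2 f3 f4 : R -> R)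
  (H1 : has_deriv_nonneg f f1) (H2 : has_deriv_nonneg f1 f2)
  (H3 : has_deriv_nonneg f2 f3) (H4 : has_deriv_nonneg f3 f4)
  (Hf0 : 0 <= f 0) (Hf10 : 0 <= f1 0)
  (Hf4 : forall u, 0 < u -> 0 < f4 u) :
  forall x, 0 < x -> 0 < x * x * f2 x + (-4) * x * f1 x + 6 * f x.
Proof.
  assert (D : forall p p', has_deriv_nonneg p p' -> forall x, 0 < x -> is_derive p x (p' x)).
  { intros p p' H x Hx. apply is_derive_Reals. now apply DP. }
  set (M := fun u => u*u*f3 u + (-2)*u*f2 u + 2*f1 u).
  assert (DM : forall x, 0 < x -> derivable_pt_lim M x (x*x*f4 x)).
  { intros x Hx. apply is_derive_Reals. unfold M.
    assert (D1 := D _ _ H2 x Hx). assert (D2 := D _ _ H3 x Hx). assert (D3 := D _ _ H4 x Hx).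
    auto_derive.
    - repeat split; eexists; eassumption.
    - fixD. ring. }
  assert (CM : filterlim M W (locally (M 0))).
  { replace (M 0) with (0*0*f3 0 + (-2)*0*f2 0 + 2*f1 0) by (unfold M; ring).
    unfold M.
    repeat first [ apply (@lim_plus W W_filter) | apply (@lim_mult W W_filter)
                 | apply lim_id | apply lim_const | eapply RC; eassumption ]. }
  assert (PM : forall x, 0 < x -> 0 < M x).
  { intros x Hx. assert (M 0 < M x) by (apply (G M (fun u => u*u*f4 u)); auto;
      intros y Hy; apply Rmult_lt_0_compat; [nra|auto]).
    assert (M 0 = 2 * f1 0) by (unfold M; ring). lra. }
  set (N := fun u => u * u * f2 u + (-4) * u * f1 u + 6 * f u).
  assert (DN : forall x, 0 < x -> derivable_pt_lim N x (M x)).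
  { intros x Hx. apply is_derive_Reals. unfold N, M.
    assert (D0 := D _ _ H1 x Hx).
    assert (D1 := D _ _ H2 x Hx). assert (D2 := D _ _ H3 x Hx).
    auto_derive.
    - repeat split; eexists; eassumption.
    - fixD. ring. }
  assert (CN : filterlim N W (locally (N 0))).
  { replace (N 0) with (0*0*f2 0 + (-4)*0*f1 0 + 6*f 0) by (unfold N; ring).
    unfold N.
    repeat first [ apply (@lim_plus W W_filter) | apply (@lim_mult W W_filter)
                 | apply lim_id | apply lim_const | eapply RC; eassumption ]. }
  intros x Hx. assert (N 0 < N x) by (apply (G N M); auto).
  assert (N 0 = 6 * f 0) by (unfold N; ring). change (0 < N x). lra.
Qed.

Lemma conv (g g1 : R -> R) : (forall x, 0 < x -> derivable_pt_lim g x (g1 x)) ->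
  (forall a b, 0 < a -> a < b -> g1 a < g1 b) ->
  forall x y t, 0 < x -> x < y -> 0 < t < 1 ->
  g (t * x + (1 - t) * y) < t * g x + (1 - t) * g y.
Proof.
  intros Hd Hi x y t Hx Hxy Ht.
  set (z := t * x + (1 - t) * y).
  assert (Hz1 : x < z) by (unfold z; nra).
  assert (Hz2 : z < y) by (unfold z; nra).
  destruct (MVT_cor2 g g1 x z Hz1) as [c1 [E1 C1]]. { intros c Hc; apply Hd; lra. }
  destruct (MVT_cor2 g g1 z y Hz2) as [c2 [E2 C2]]. { intros c Hc; apply Hd; lra. }
  assert (Hc : g1 c1 < g1 c2) by (apply Hi; lra).
  assert (Ez1 : z - x = (1 - t) * (y - x)) by (unfold z; ring).
  assert (Ez2 : y - z = t * (y - x)) by (unfold z; ring).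
  rewrite Ez1 in E1. rewrite Ez2 in E2.
  assert (K : 0 < t * (1 - t) * (y - x)) by (apply Rmult_lt_0_compat; [nra|lra]).
  assert (0 < t * (1 - t) * (y - x) * (g1 c2 - g1 c1)) by (apply Rmult_lt_0_compat; lra).
  nra.
Qed.


Theorem lemma5 (f f1 f2 f3 f4 : R -> R)
  (H1 : has_deriv_nonneg f f1) (H2 : has_deriv_nonneg f1 f2)
  (H3 : has_deriv_nonneg f2 f3) (H4 : has_deriv_nonneg f3 f4)
  (Hf0 : 0 <= f 0) (Hf10 : 0 <= f1 0)
  (Hf4 : forall u, 0 < u -> 0 < f4 u) :
  strictly_convex_on (fun u => 0 < u) (fun u => f u / u ^ 2).
Proof.
  assert (NP := main_aux f f1 f2 f3 f4 H1 H2 H3 H4 Hf0 Hf10 Hf4).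
  assert (D : forall p p', has_deriv_nonneg p p' -> forall x, 0 < x -> is_derive p x (p' x)).
  { intros p p' H x Hx. apply is_derive_Reals. now apply DP. }
  set (g1 := fun u => f1 u / u ^ 2 - 2 * f u / u ^ 3).
  assert (Dg : forall x, 0 < x -> derivable_pt_lim (fun u => f u / u ^ 2) x (g1 x)).
  { intros x Hx. apply is_derive_Reals. unfold g1.
    assert (D0 := D _ _ H1 x Hx).
    auto_derive.
    - repeat split; try (eexists; eassumption); apply Rgt_not_eq; repeat apply Rmult_lt_0_compat; lra.
    - fixD. field. lra. }
  assert (Dg1 : forall x, 0 < x -> derivable_pt_lim g1 x
     ((x * x * f2 x + (-4) * x * f1 x + 6 * f x) / x ^ 4)).
  { intros x Hx. apply is_derive_Reals. unfold g1.
    assert (D0 := D _ _ H1 x Hx). assert (D1 := D _ _ H2 x Hx).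
    auto_derive.
    - repeat split; try (eexists; eassumption); apply Rgt_not_eq; repeat apply Rmult_lt_0_compat; lra.
    - fixD. field. lra. }
  assert (Ig1 := SI g1 _ Dg1).
  assert (Cv := conv _ g1 Dg (fun a b Ha Hab => Ig1 ltac:(intros u Hu; apply Rdiv_lt_0_compat;
       [apply NP; lra | apply pow_lt; lra]) a b Ha Hab)).
  intros x y t Hx Hy Hxy Ht.
  destruct (Rlt_or_le x y) as [Hl|Hl].
  - now apply Cv.
  - assert (y < x) by lra.
    replace (t * x + (1 - t) * y) with ((1 - t) * y + (1 - (1 - t)) * x) by ring.
    replace (t * (f x / x ^ 2) + (1 - t) * (f y / y ^ 2))
      with ((1 - t) * (f y / y ^ 2) + (1 - (1 - t)) * (f x / x ^ 2)) by ring.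
    apply Cv; lra.
Qed.
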